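(* Let $\mathcal{G}$ be a (possibly weighted) undirected graph on $n$ vertices $v_1,\dots,v_n$ in which every vertex has positive degree, and let $\mathbf{P}$, $\mathbf{D}$ be as in the context. Let $0 < t_1 < t_2 < \cdots < t_J$ be integers ($J \ge 1$), and define the filter bank $\mathcal{W}_J' = \{\boldsymbol{\Psi}_j', \boldsymbol{\Phi}_J'\}_{j=0}^{J-1}$ by $$\boldsymbol{\Psi}_0' = \mathbf{I}_n - \mathbf{P}^{t_1},\qquad \boldsymbol{\Psi}_j' = \mathbf{P}^{t_j} - \mathbf{P}^{t_{j+1}}\ (1 \le j \le J-1),\qquad \boldsymbol{\Phi}_J' = \mathbf{P}^{t_J}.$$ Then there exists a constant $C > 0$ depending only on $t_1$ and $t_J$ such that for all $\mathbf{x} \in \mathbb{R}^n$, $$C\,\|\mathbf{x}\|_{\mathbf{D}^{-1/2}}^2 \;\le\; \|\boldsymbol{\Phi}_J'\mathbf{x}\|_{\mathbf{D}^{-1/2}}^2 + \sum_{j=0}^{J-1} \|\boldsymbol{\Psi}_j'\mathbf{x}\|_{\mathbf{D}^{-1/2}}^2 \;\le\; \|\mathbf{x}\|_{\mathbf{D}^{-1/2}}^2 .$$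
   Context: $\mathbf{A}$ denotes the (symmetric, nonnegative) weighted adjacency matrix of $\mathcal{G}$, $d_i = \sum_k \mathbf{A}[i,k] > 0$ the degree of $v_i$, and $\mathbf{D} = \mathrm{diag}(d_1,\dots,d_n)$. $\mathbf{P} = \tfrac12(\mathbf{I}_n + \mathbf{A}\mathbf{D}^{-1})$ is the lazy random walk matrix; $\mathbf{P}^t$ denotes its $t$-th matrix power. Graph signals $\mathbf{x}\in\mathbb{R}^n$ are equipped with the weighted inner product $\langle \mathbf{x},\mathbf{y}\rangle_{\mathbf{D}^{-1/2}} = \langle \mathbf{D}^{-1/2}\mathbf{x}, \mathbf{D}^{-1/2}\mathbf{y}\rangle$ (standard Euclidean inner product on the right) and induced norm $\|\mathbf{x}\|_{\mathbf{D}^{-1/2}}^2 = \|\mathbf{D}^{-1/2}\mathbf{x}\|_2^2 = \sum_{i=1}^n \mathbf{x}[i]^2/d_i$; this space is denoted $L^2(\mathcal{G},\mathbf{D}^{-1/2})$. *)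

(* Defs.v *)
From HB Require Import structures.
From mathcomp Require Import all_boot all_order all_algebra.
From mathcomp Require Import reals.
Set Implicit Arguments. Unset Strict Implicit. Unset Printing Implicit Defensive.
Import Order.TTheory GRing.Theory Num.Theory.
Local Open Scope ring_scope.

Definition deg {R : realType} {n : nat} (A : 'M[R]_n) (i : 'I_n) : R :=
  \sum_(k < n) A i k.

Definition Dinv {R : realType} {n : nat} (A : 'M[R]_n) : 'M[R]_n :=
  diag_mx (\row_i (deg A i)^-1).

(* Lazy random walk matrix P = 1/2 (I + A D^{-1}). *)
Definition lazyP {R : realType} {n : nat} (A : 'M[R]_n) : 'M[R]_n :=
  (2%:R)^-1 *: (1%:M + A *m Dinv A).

Definition mxpow {R : realType} {n : nat} (M : 'M[R]_n) (t : nat) : 'M[R]_n :=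
  iter t (mulmx M) 1%:M.

Definition wnorm2 {R : realType} {n : nat} (A : 'M[R]_n) (x : 'cV[R]_n) : R :=
  \sum_(i < n) (x i 0) ^+ 2 / deg A i.

(* Filter bank W_J': scales t 1 < ... < t J (1-indexed). *)
Definition Psi' {R : realType} {n : nat} (A : 'M[R]_n) (t : nat -> nat) (j : nat)
  : 'M[R]_n :=
  if j == 0%N then 1%:M - mxpow (lazyP A) (t 1%N)
  else mxpow (lazyP A) (t j) - mxpow (lazyP A) (t j.+1).

Definition Phi' {R : realType} {n : nat} (A : 'M[R]_n) (t : nat -> nat) (J : nat)
  : 'M[R]_n := mxpow (lazyP A) (t J).

(* Main.v *)
Require Import Defs.
From HB Require Import structures.
From mathcomp Require Import all_boot all_order all_algebra.
From mathcomp Require Import reals.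
From mathcomp Require Import ring lra zify.
Import Order.TTheory GRing.Theory Num.Theory.
Local Open Scope ring_scope.

Section Conc.
Variables (R : realType) (n : nat) (A : 'M[R]_n).
Hypothesis Asym : A^T = A.
Hypothesis Apos : forall i j, 0 <= A i j.
Hypothesis dpos : forall i, 0 < deg A i.

Definition ip (x y : 'cV[R]_n) := \sum_i x i 0 * y i 0 / deg A i.

Lemma Asym' i j : A i j = A j i.
Proof. by rewrite -{1}Asym mxE. Qed.

Lemma ipC x y : ip x y = ip y x.
Proof. by apply: eq_bigr => i _; rewrite (mulrC (x i 0)). Qed.

Lemma ipDl x y z : ip (x + y) z = ip x z + ip y z.
Proof. rewrite /ip -big_split; apply: eq_bigr => i _; rewrite /= !mxE; ring. Qed.

Lemma ipBl x y z : ip (x - y) z = ip x z - ip y z.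
Proof. rewrite /ip -sumrB; apply: eq_bigr => i _; rewrite !mxE; ring. Qed.

Lemma ipZl a x y : ip (a *: x) y = a * ip x y.
Proof. rewrite /ip mulr_sumr; apply: eq_bigr => i _; rewrite !mxE; ring. Qed.

Lemma ipBr x y z : ip x (y - z) = ip x y - ip x z.
Proof. by rewrite ipC ipBl ![ip _ x]ipC. Qed.

Lemma wnormE x : wnorm2 A x = ip x x.
Proof. by apply: eq_bigr => i _; rewrite expr2. Qed.

Lemma ip_ge0 x : 0 <= ip x x.
Proof.
apply: sumr_ge0 => i _; apply: divr_ge0; last exact: (ltW (dpos i)).
by rewrite -expr2 sqr_ge0.
Qed.

Lemma PE (x : 'cV[R]_n) : lazyP A *m x = 2%:R^-1 *: (x + A *m (Dinv A *m x)).
Proof. by rewrite /lazyP -scalemxAl mulmxDl mul1mx mulmxA. Qed.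

Lemma Dinv_mul (x : 'cV[R]_n) k : (Dinv A *m x) k 0 = (deg A k)^-1 * x k 0.
Proof. by rewrite /Dinv mul_diag_mx !mxE. Qed.

Definition K (x y : 'cV[R]_n) := \sum_i \sum_k A i k * ((deg A k)^-1 * x k 0) * ((deg A i)^-1 * y i 0).

Lemma ipAD x y : ip (A *m (Dinv A *m x)) y = K x y.
Proof.
rewrite /ip /K; apply: eq_bigr => i _; rewrite mxE !mulr_suml.
by apply: eq_bigr => k _; rewrite Dinv_mul; ring.
Qed.

Lemma KC x y : K x y = K y x.
Proof.
rewrite /K exchange_big; apply: eq_bigr => i _; apply: eq_bigr => k _.
rewrite (Asym' k i); ring.
Qed.

Lemma P_sa x y : ip (lazyP A *m x) y = ip x (lazyP A *m y).
Proof.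
rewrite !PE ipZl [ip x _]ipC ipZl !ipDl !ipAD ipC KC.
by rewrite [ip y x]ipC.
Qed.

Lemma Pquad y : ip y (lazyP A *m y) = 2%:R^-1 * (ip y y + K y y).
Proof. by rewrite ipC PE ipZl ipDl ipAD. Qed.

Lemma Kbound y s : s ^+ 2 = 1 -> 0 <= ip y y + s * K y y.
Proof.
move=> hs.
pose u i := (deg A i)^-1 * y i 0.
pose Q := \sum_i \sum_k A i k * u i ^+ 2.
have hQ : ip y y = Q.
  rewrite /ip /Q; apply: eq_bigr => i _; rewrite -mulr_suml -/(deg A i) /u.
  have := dpos i; rewrite lt0r => /andP [hd _]; field; exact: hd.
have hK : K y y = \sum_i \sum_k A i k * u k * u i by [].
have h0 : 0 <= \sum_i \sum_k A i k * (u i + s * u k) ^+ 2.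
  by apply: sumr_ge0 => i _; apply: sumr_ge0 => k _; apply: mulr_ge0 => //; exact: sqr_ge0.
have e : \sum_i \sum_k A i k * (u i + s * u k) ^+ 2 =
   \sum_i \sum_k (A i k * u i ^+ 2 + (2%:R * s) * (A i k * u k * u i) + s ^+ 2 * (A i k * u k ^+ 2)).
  by apply: eq_bigr => i _; apply: eq_bigr => k _; ring.
have e2 : \sum_i \sum_k (A i k * u k ^+ 2) = Q.
  rewrite /Q exchange_big; apply: eq_bigr => i _; apply: eq_bigr => k _.
  by rewrite (Asym' k i).
move: h0; rewrite e.
under eq_bigr => i _ do rewrite big_split big_split /= -!mulr_sumr.
rewrite big_split big_split /= -!mulr_sumr e2 -/Q -hK -hQ hs.
move=> h; nra.
Qed.

Lemma ipP_ge0 y : 0 <= ip y (lazyP A *m y).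
Proof. rewrite Pquad; have : 0 <= ip y y + 1 * K y y by apply: Kbound; rewrite expr1n.
lra. Qed.

Lemma ipP_le y : ip y (lazyP A *m y) <= ip y y.
Proof.
rewrite Pquad; have : 0 <= ip y y + (-1) * K y y by apply: Kbound; rewrite sqrrN expr1n.
have := ip_ge0 y; lra.
Qed.


Lemma mxpowS' (M : 'M[R]_n) m : mxpow M m.+1 = mxpow M m *m M.
Proof.
elim: m => [|m IH]; first by rewrite /mxpow /= mulmx1 mul1mx.
by rewrite (_ : mxpow M m.+2 = M *m mxpow M m.+1) // {1}IH mulmxA.
Qed.

Lemma mxpowD (M : 'M[R]_n) m k : mxpow M (m + k) = mxpow M m *m mxpow M k.
Proof.
elim: m => [|m IH]; first by rewrite add0n mul1mx.
by rewrite addSn (_ : mxpow M (m + k).+1 = M *m mxpow M (m + k)) // IH mulmxA.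
Qed.

Lemma Pm_sa m x y : ip (mxpow (lazyP A) m *m x) y = ip x (mxpow (lazyP A) m *m y).
Proof.
elim: m x y => [|m IH] x y; first by rewrite !mul1mx.
rewrite (_ : mxpow (lazyP A) m.+1 = lazyP A *m mxpow (lazyP A) m) // -mulmxA P_sa IH.
by rewrite (_ : lazyP A *m mxpow (lazyP A) m = mxpow (lazyP A) m.+1) // mxpowS' -mulmxA.
Qed.

Lemma Pb z : ip (lazyP A *m z) (lazyP A *m z) <= ip z (lazyP A *m z).
Proof.
set P := lazyP A.
have ha := ipP_ge0 (z - P *m z).
have hc := ipP_le (P *m z).
move: ha; rewrite mulmxBr ipBl !ipBr.
have e : ip z (P *m (P *m z)) = ip (P *m z) (P *m z) by rewrite -P_sa ipC.
rewrite e; lra.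
Qed.

Lemma ipPk k (u v : 'cV[R]_n) :
  ip u (mxpow (lazyP A) k *m v) = ip (mxpow (lazyP A) k *m u) v.
Proof. by rewrite Pm_sa. Qed.

Lemma G_even y k :
  ip y (mxpow (lazyP A) (k + k).+1 *m y) <= ip y (mxpow (lazyP A) (k + k) *m y).
Proof.
set P := lazyP A.
have e1 : mxpow P (k + k).+1 *m y = mxpow P k *m (P *m (mxpow P k *m y)).
  rewrite -addnS mxpowD -mulmxA (_ : mxpow P k.+1 = P *m mxpow P k) //.
  by rewrite -mulmxA.
have e2 : mxpow P (k + k) *m y = mxpow P k *m (mxpow P k *m y).
  by rewrite mxpowD -mulmxA.
rewrite e1 e2 ipPk [X in _ <= X]ipPk.
exact: ipP_le.
Qed.

Lemma G_odd y k :
  ip y (mxpow (lazyP A) (k.+1 + k.+1) *m y) <= ip y (mxpow (lazyP A) (k + k.+1) *m y).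
Proof.
set P := lazyP A.
have e1 : mxpow P (k.+1 + k.+1) *m y = mxpow P k.+1 *m (mxpow P k.+1 *m y).
  by rewrite mxpowD -mulmxA.
have e3 : mxpow P k.+1 *m y = P *m (mxpow P k *m y).
  by rewrite (_ : mxpow P k.+1 = P *m mxpow P k) // -mulmxA.
have e2 : mxpow P (k + k.+1) *m y = mxpow P k *m (P *m (mxpow P k *m y)).
  by rewrite mxpowD -mulmxA e3.
rewrite e1 e2 ipPk [X in _ <= X]ipPk e3.
exact: Pb.
Qed.

Lemma G_step y m :
  ip y (mxpow (lazyP A) m.+1 *m y) <= ip y (mxpow (lazyP A) m *m y).
Proof.
have := odd_double_half m; set k := m./2; rewrite -addnn.
move=> e; case: (odd m) e => e; simpl in e.
- have -> : m.+1 = k.+1 + k.+1 by lia.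
  have -> : m = k + k.+1 by lia.
  exact: G_odd.
- have -> : m = k + k by lia.
  exact: G_even.
Qed.

Lemma G_mono y m m' : (m <= m')%N ->
  ip y (mxpow (lazyP A) m' *m y) <= ip y (mxpow (lazyP A) m *m y).
Proof.
elim: m' => [|m' IH]; first by rewrite leqn0 => /eqP ->.
rewrite leq_eqVlt => /orP [/eqP -> //|]; rewrite ltnS => h.
exact: le_trans (G_step _ _) (IH h).
Qed.

Lemma step_ub x a b : (a <= b)%N ->
  ip ((mxpow (lazyP A) a - mxpow (lazyP A) b) *m x) ((mxpow (lazyP A) a - mxpow (lazyP A) b) *m x)
  + ip (mxpow (lazyP A) b *m x) (mxpow (lazyP A) b *m x)
  <= ip (mxpow (lazyP A) a *m x) (mxpow (lazyP A) a *m x).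
Proof.
move=> hab; set P := lazyP A.
rewrite mulmxBl ipBl !ipBr [ip (mxpow P b *m x) (mxpow P a *m x)]ipC.
have e1 : ip (mxpow P b *m x) (mxpow P b *m x) = ip x (mxpow P (b + b) *m x).
  by rewrite Pm_sa mulmxA -mxpowD.
have e2 : ip (mxpow P a *m x) (mxpow P b *m x) = ip x (mxpow P (a + b) *m x).
  by rewrite Pm_sa mulmxA -mxpowD.
have := @G_mono x (a + b) (b + b) (leq_add hab (leqnn b)).
rewrite -e1 -e2; lra.
Qed.

End Conc.
Lemma cs_sum (R : realType) N (a : 'I_N -> R) :
  (\sum_i a i) ^+ 2 <= N%:R * \sum_i a i ^+ 2.
Proof.
have h0 : 0 <= \sum_i \sum_j (a i - a j) ^+ 2.
  by apply: sumr_ge0 => i _; apply: sumr_ge0 => j _; exact: sqr_ge0.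
have e : \sum_i \sum_j (a i - a j) ^+ 2 =
  \sum_i \sum_j (a i ^+ 2 + a j ^+ 2 - 2%:R * (a i * a j)).
  by apply: eq_bigr => i _; apply: eq_bigr => j _; ring.
move: h0; rewrite e.
under eq_bigr => i _ do rewrite sumrB big_split /= sumr_const card_ord -mulr_sumr.
rewrite sumrB big_split /= sumr_const card_ord -mulr_sumr.
under [X in _ * X]eq_bigr => i _ do rewrite -mulr_sumr.
rewrite -mulr_suml -expr2 sumrMnl -mulr_natl.
move=> h; lra.
Qed.

Lemma tele (V : zmodType) (f : nat -> V) N :
  \sum_(i < N) (f i - f i.+1) = f 0%N - f N.
Proof.
elim: N => [|N IH]; first by rewrite big_ord0 subrr.
by rewrite big_ord_recr /= IH addrA subrK.
Qed.

Theorem theorem1 (R : realType) (a b : nat) :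
  (0 < a)%N -> (a <= b)%N ->
  exists C : R, 0 < C /\
    forall (n : nat) (A : 'M[R]_n) (J : nat) (t : nat -> nat) (x : 'cV[R]_n),
      A^T = A ->
      (forall i j, 0 <= A i j) ->
      (forall i, 0 < deg A i) ->
      (0 < J)%N ->
      t 1%N = a -> t J = b ->
      (forall j : nat, (1 <= j < J)%N -> (t j < t j.+1)%N) ->
      C * wnorm2 A x <=
        wnorm2 A (Phi' A t J *m x) + \sum_(j < J) wnorm2 A (Psi' A t j *m x)
      /\
      wnorm2 A (Phi' A t J *m x) + \sum_(j < J) wnorm2 A (Psi' A t j *m x)
        <= wnorm2 A x.
Proof.
move=> ha hab; exists (b.+1%:R)^-1; split; first by rewrite invr_gt0 ltr0n.
move=> n A J t x Asym Apos dpos hJ ht1 htJ hinc.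
set P := lazyP A.
pose s j := if j == 0%N then 0%N else t j.
have hPsi : forall j, Psi' A t j = mxpow P (s j) - mxpow P (s j.+1) by case.
have hPhi : Phi' A t J = mxpow P (s J) by rewrite /s; case: J hJ {hinc htJ}.
have smono : forall j, (j < J)%N -> (s j <= s j.+1)%N.
  case=> [|j] hj //; rewrite /s /=; apply: ltnW; apply: hinc; lia.
under eq_bigr => j _ do rewrite hPsi.
rewrite hPhi !wnormE.
under eq_bigr => j _ do rewrite wnormE.
set S := (X in _ <= X /\ _).
have ub : forall m, (m <= J)%N ->
  \sum_(j < m) ip R n A ((mxpow P (s j) - mxpow P (s j.+1)) *m x)
                        ((mxpow P (s j) - mxpow P (s j.+1)) *m x)
  + ip R n A (mxpow P (s m) *m x) (mxpow P (s m) *m x) <= ip R n A x x.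
  elim=> [|m IH] hm; first by rewrite big_ord0 add0r /= mul1mx.
  rewrite big_ord_recr /=.
  have := step_ub R n A Asym Apos dpos x _ _ (smono m hm).
  have := IH (ltnW hm); lra.
split; last by rewrite /S addrC; exact: ub.
have tj : forall j, (1 <= j <= J)%N -> (j <= t j)%N.
  elim=> [|j IH] hj //; case: j IH hj => [|j] IH hj; first by rewrite ht1.
  have := hinc j.+1; have := IH; lia.
have hJb : (J <= b)%N by rewrite -htJ; apply: tj; lia.
pose v (i : 'I_J.+1) := if (i < J)%N then (mxpow P (s i) - mxpow P (s i.+1)) *m x
                         else mxpow P (s J) *m x.
have hv : \sum_i v i = x.
  rewrite big_ord_recr /= /v ltnn.
  under eq_bigr => i _ do rewrite /= ltn_ord.
  by rewrite -mulmx_suml (@tele _ (fun k => mxpow P (s k))) mulmxBl mul1mx subrK.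
have hS : S = \sum_i ip R n A (v i) (v i).
  by rewrite /S big_ord_recr /= /v ltnn addrC; congr (_ + _); apply: eq_bigr => i _; rewrite /= ltn_ord.
have key : ip R n A x x <= J.+1%:R * S.
  rewrite hS {1 2}/ip.
  have xe : forall i, x i 0 = \sum_k v k i 0 by move=> i; rewrite -summxE hv.
  rewrite exchange_big /= mulr_sumr; apply: ler_sum => i _.
  rewrite xe -mulr_suml mulrA; apply: ler_wpM2r.
    by rewrite invr_ge0; exact: ltW.
  rewrite -expr2; under [X in _ <= _ * X]eq_bigr => k _ do rewrite -expr2.
  exact: cs_sum.
have S0 : 0 <= S by rewrite hS; apply: sumr_ge0 => i _; exact: ip_ge0.
rewrite mulrC ler_pdivrMr ?ltr0n //.
apply: (le_trans key); rewrite [S * _]mulrC; apply: ler_wpM2r => //.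
by rewrite ler_nat ltnS.
Qed.
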